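(* Let $f_A, f_R$ and $F$ be as in the context, with $\chi = 1$ (so that $F(d,T) = (f_A+f_R)(|d|)\,d$). For $R>0$, the ring state $\delta_{(R,0)}$ (the uniform probability measure on the circle of radius $R$ centred at the origin) is a nontrivial equilibrium state of the mean-field equation $\partial_t\rho + \nabla\cdot[\rho\,(F(\cdot,T)\ast\rho)] = 0$ if and only if $$\int_0^{\pi} (f_A+f_R)\Big(R\sqrt{(1-\cos\phi)^2+\sin^2\phi}\Big)\,(1-\cos\phi)\,d\phi = 0 .$$
   Context: Let $f_R, f_A:[0,\infty)\to\mathbb{R}$ be smooth integrable functions with $f_R\ge 0$ and $f_A\le 0$, such that there is $d_a>0$ with $(f_A+f_R)(\rho)\le 0$ for $\rho>d_a$ and $(f_A+f_R)(\rho)>0$ for $0\le\rho<d_a$. For $\chi\in[0,1]$, $s=(0,1)$, $l=(1,0)$, let $T=\chi\, s\otimes s + l\otimes l$ and define the interaction force $F(d,T) = f_A(|d|)\,T d + f_R(|d|)\,d$ for $d\in\mathbb{R}^2$; assume $F$ is $C^1$ with bounded total derivatives in both arguments. Assume moreover there is $d_e>d_a$ such that $\chi f_A+f_R$ is strictly decreasing on $[0,d_e]$ for all $\chi\in[0,1]$. A Borel probability measure $\mu$ on $\mathbb{R}^2$ is an equilibrium state of the mean-field equation if $K(x):=(F(\cdot,T)\ast\mu)(x)=\int_{\mathbb{R}^2}F(x-y,T)\,d\mu(y)$ satisfies $K\in L^1_{loc}(d\mu)$ and $K=0$ on $\mathrm{supp}(\mu)$ $\mu$-a.e. For $R>0$,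 $r\ge 0$, the ellipse state $\delta_{(R,r)}$ is the probability measure uniformly distributed on $\{(R\cos\phi,(R+r)\sin\phi):\phi\in[0,2\pi)\}$; $\delta_{(R,0)}$ is the ring state of radius $R$. *)

(* Defs.v *)
From HB Require Import structures.
From mathcomp Require Import all_boot all_order all_algebra.
From mathcomp Require Import all_classical all_reals all_analysis.
From mathcomp Require Import measurable_realfun.
Set Implicit Arguments.
Unset Strict Implicit.
Unset Printing Implicit Defensive.
Import Order.TTheory GRing.Theory Num.Theory.
Import numFieldNormedType.Exports.
Local Open Scope classical_set_scope.
Local Open Scope ring_scope.

(* Points of R^2 are pairs (x.1, x.2); the measurable structure is the
   product (= Borel) sigma-algebra. *)

Definition enorm {R : realType} (d : R * R) : R := Num.sqrt (d.1 ^+ 2 + d.2 ^+ 2).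

(* T = chi s(x)s + l(x)l with s = (0,1), l = (1,0), i.e. T = diag(1, chi);
   Tapp chi d = T d. *)
Definition Tapp {R : realType} (chi : R) (d : R * R) : R * R := (d.1, chi * d.2).

Definition Fint {R : realType} (fA fR : R -> R) (chi : R) (d : R * R) : R * R :=
  (fA (enorm d) * (Tapp chi d).1 + fR (enorm d) * d.1,
   fA (enorm d) * (Tapp chi d).2 + fR (enorm d) * d.2).

Definition Kfield {R : realType} (fA fR : R -> R) (chi : R)
  (mu : {measure set (R * R)%type -> \bar R}) (x : R * R) : R * R :=
  (Rintegral mu setT (fun y => (Fint fA fR chi (x.1 - y.1, x.2 - y.2)).1),
   Rintegral mu setT (fun y => (Fint fA fR chi (x.1 - y.1, x.2 - y.2)).2)).

Definition msupp {R : realType} (mu : {measure set (R * R)%type -> \bar R}) : set (R * R)%type :=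
  [set x | forall U : set (R * R)%type, open U -> U x -> (0 < mu U)%E].

Definition equilibrium {R : realType} (fA fR : R -> R) (chi : R)
  (mu : probability (R * R)%type R) : Prop :=
  (forall C : set (R * R)%type, compact C ->
      mu.-integrable C (fun x => (enorm (Kfield fA fR chi mu x))%:E))
  /\ {ae mu, forall x, msupp mu x -> Kfield fA fR chi mu x = (0, 0)}.

Definition ellipse_param {R : realType} (a r : R) (phi : measurableTypeR R) : (R * R)%type :=
  (a * cos phi, (a + r) * sin phi).

Lemma measurable_ellipse_param {R : realType} (a r : R) :
  measurable_fun setT (ellipse_param a r).
Proof.
apply: measurable_fun_pair; apply: continuous_measurable_fun => x.
- by apply: cvgM; [exact: cvg_cst | exact: continuous_cos].
- by apply: cvgM; [exact: cvg_cst | exact: continuous_sin].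
Qed.

HB.instance Definition _ {R : realType} (a r : R) :=
  isMeasurableFun.Build _ _ _ _ (ellipse_param a r) (measurable_ellipse_param a r).

Lemma two_pi_gt0 {R : realType} : (0 : R) < pi *+ 2.
Proof. by rewrite mulrn_wgt0 // pi_gt0. Qed.

(* The ellipse state delta_(a, r): push-forward of the uniform probability
   on the parameter interval [0, 2 pi] by the parametrisation
   (the endpoint 2 pi is a null set, so this is the uniform distribution
   over phi in [0, 2 pi)). *)
Definition ellipse_state {R : realType} (a r : R) : probability (R * R)%type R :=
  distribution (uniform_prob (@two_pi_gt0 R)) (ellipse_param a r).

Definition ring_state {R : realType} (a : R) : probability (R * R)%type R :=
  ellipse_state a 0.

(* Main.v *)
Require Import Defs.
From HB Require Import structures.
From mathcomp Require Import all_boot all_order all_algebra.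
From mathcomp Require Import all_classical all_reals all_analysis.
From mathcomp Require Import measurable_realfun.
From mathcomp Require Import ring lra.
Import Order.TTheory GRing.Theory Num.Theory.
Import numFieldNormedType.Exports.
Local Open Scope classical_set_scope.
Local Open Scope ring_scope.

Section tools.
Context {R : realType}.
Notation mu := (@lebesgue_measure R).
Local Notation RI a b f := (Rintegral mu `[a, b] f).

Lemma cint (f : R -> R) (cf : continuous f) a b : mu.-integrable `[a, b] (EFin \o f).
Proof.
by apply: continuous_compact_integrable; [exact: segment_compact | exact: continuous_subspaceT].
Qed.

Lemma primP {f : R -> R} (cf : continuous f) {c x : R} : c < x ->
  derivable (fun y : R => RI c y f) x 1 /\ (fun y : R => RI c y f)^`()%classic x = f x.
Proof.
move=> cx; apply: (@continuous_FTC1_closed _ f c x (x + 1)) => //.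
- by rewrite ltrDl.
- exact: cint.
- exact: cf.
Qed.

Lemma primC {f : R -> R} (cf : continuous f) {c x : R} : c < x ->
  {for x, continuous (fun y : R => RI c y f)}.
Proof.
move=> cx; apply: differentiable_continuous; apply/derivable1_diffP.
by case: (primP cf cx).
Qed.

Lemma ftc_gen (f F : R -> R) (cf : continuous f) (a b : R) : a < b ->
  (forall x, a <= x <= b -> derivable F x 1 /\ F^`()%classic x = f x) ->
  RI a b f = F b - F a.
Proof.
move=> ab dF.
have cF : forall x, a <= x <= b -> {for x, continuous F}.
  move=> x xab; apply: differentiable_continuous; apply/derivable1_diffP.
  exact: (dF x xab).1.
have cfab : {within `[a, b], continuous f} by exact: continuous_subspaceT.
have H := @continuous_FTC2 R f F a b ab cfab.
rewrite /Rintegral H /=.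
- by [].
- split.
  + move=> z; rewrite in_itv /= => /andP[az zb].
    by apply: (dF z _).1; rewrite !ltW.
  + by apply: cvg_at_right_filter; apply: cF; rewrite lexx ltW.
  + by apply: cvg_at_left_filter; apply: cF; rewrite lexx ltW.
- move=> z; rewrite in_itv /= => /andP[az zb].
  by apply: (dF z _).2; rewrite !ltW.
Qed.

Lemma ftc (f : R -> R) (cf : continuous f) (c a b : R) : c < a -> a < b ->
  RI a b f = RI c b f - RI c a f.
Proof.
move=> ca ab; apply: (@ftc_gen f (fun y => RI c y f) cf a b ab) => x /andP[ax xb].
have := primP cf (lt_le_trans ca ax); by [].
Qed.

Lemma RI_pt (f : R -> R) (a : R) : RI a a f = 0.
Proof. by rewrite /Rintegral set_itv1 integral_set1. Qed.

Lemma RI_split (f : R -> R) (cf : continuous f) (a b c : R) : a <= b -> b <= c ->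
  RI a c f = RI a b f + RI b c f.
Proof.
rewrite le_eqVlt => /predU1P[<-|ab]; first by rewrite RI_pt add0r.
rewrite le_eqVlt => /predU1P[<-|bc]; first by rewrite RI_pt addr0.
have c0 : a - 1 < a by rewrite gtrBl ltr01.
rewrite (ftc f cf (a-1) a c c0 (lt_trans ab bc)).
rewrite (ftc f cf (a-1) a b c0 ab).
rewrite (ftc f cf (a-1) b c (lt_trans c0 ab) bc).
by ring.
Qed.


Lemma contD (f : R -> R) (cf : continuous f) (c : R) : continuous (fun x => f (x + c)).
Proof.
move=> x; apply: (@continuous_comp _ _ _ (fun x => x + c) f).
  by apply: cvgD; [exact: cvg_id | exact: cvg_cst].
exact: cf.
Qed.

Lemma RI_shift (f : R -> R) (cf : continuous f) (a b c : R) : a <= b ->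
  RI a b (fun x => f (x + c)) = RI (a + c) (b + c) f.
Proof.
rewrite le_eqVlt => /predU1P[<-|ab]; first by rewrite !RI_pt.
have d0 : a + c - 1 < a + c by rewrite gtrBl ltr01.
rewrite (ftc f cf (a + c - 1) (a + c) (b + c) d0); last by rewrite ltrD2r.
pose F := fun x => RI (a + c - 1) (x + c) f.
suff dF : forall x, a <= x <= b -> derivable F x 1 /\ F^`()%classic x = f (x + c).
  by rewrite (@ftc_gen _ F (contD f cf c) a b ab dF).
move=> x /andP[ax xb].
have xc : a + c - 1 < x + c by rewrite (lt_le_trans d0) // lerD2r.
have [dG G'] := primP cf xc.
have ds : derivable (fun y : R => y + c) x 1.
  by apply/derivable1_diffP; apply: differentiableD.
have -> : F = (fun y => RI (a + c - 1) y f) \o (fun y => y + c) by [].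
split.
  apply/derivable1_diffP; apply: differentiable_comp; first exact/derivable1_diffP.
  exact/derivable1_diffP.
rewrite derive1_comp // G'.
have -> : (fun y : R => y + c)^`()%classic x = 1.
  by rewrite derive1E; apply: derive_val; exact: is_derive_shift.
by rewrite mulr1.
Qed.

Lemma RI_opp (f : R -> R) (cf : continuous f) (a b : R) : a <= b ->
  RI (- b) (- a) f = RI a b (fun x => f (- x)).
Proof.
move=> ab; rewrite /Rintegral integration_by_substitution_oppr //.
exact: continuous_subspaceT.
Qed.

Lemma RI_scale (f : R -> R) (cf : continuous f) (a b k : R) :
  RI a b (fun x => k * f x) = k * RI a b f.
Proof. by rewrite RintegralZl //; exact: cint. Qed.

Lemma RI_add (f g : R -> R) (cf : continuous f) (cg : continuous g) (a b : R) :
  RI a b (fun x => f x + g x) = RI a b f + RI a b g.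
Proof. by rewrite RintegralD //; exact: cint. Qed.

End tools.

Section trig.
Context {R : realType}.
Local Notation RI a b f := (Rintegral (@lebesgue_measure R) `[a, b] f).
Local Notation tp := (pi *+ 2 : R).

Lemma tp_ge0 : 0 <= tp. Proof. by rewrite mulrn_wge0 // pi_ge0. Qed.
Lemma tp_gt0 : 0 < tp. Proof. by rewrite mulrn_wgt0 // pi_gt0. Qed.
Lemma pi_le_tp : pi <= tp. Proof. by rewrite mulr2n lerDl pi_ge0. Qed.

Lemma cosP (x : R) : cos (x + tp) = cos x.
Proof. by rewrite cosD cos2pi sin2pi mulr1 mulr0 subr0. Qed.
Lemma sinP (x : R) : sin (x + tp) = sin x.
Proof. by rewrite sinD cos2pi sin2pi mulr1 mulr0 addr0. Qed.

Lemma per_shift (h : R -> R) (ch : continuous h) (ph : forall x, h (x + tp) = h x)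
  (t : R) : 0 <= t <= tp -> RI 0 tp (fun x => h (x + t)) = RI 0 tp h.
Proof.
move=> /andP[t0 t2].
rewrite RI_shift //; last exact: tp_ge0. rewrite add0r (RI_split h ch t tp (tp + t)) //; last by rewrite lerDl.
have := RI_shift h ch 0 t tp t0; rewrite add0r [t + tp]addrC => <-.
have -> : (fun x => h (x + tp)) = h by apply/funext => x; exact: ph.
by rewrite addrC -RI_split.
Qed.

Lemma even_half (h : R -> R) (ch : continuous h) (ph : forall x, h (x + tp) = h x)
  (eh : forall x, h (- x) = h x) : RI 0 tp h = 2 * RI 0 pi h.
Proof.
rewrite (RI_split h ch 0 pi tp) ?pi_ge0 ?pi_le_tp //.
have npi : - pi <= 0 :> R by rewrite oppr_le0 pi_ge0.
have e : - pi + tp = pi by rewrite mulr2n addKr.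
have := RI_shift h ch (- pi) 0 tp npi; rewrite add0r e => <-.
have -> : (fun x => h (x + tp)) = h by apply/funext => x; exact: ph.
have := RI_opp h ch 0 pi (pi_ge0 _); rewrite oppr0 => ->.
have -> : (fun x => h (- x)) = h by apply/funext => x; exact: eh.
by rewrite mulr2n mulrDl mul1r.
Qed.

Lemma odd_zero (h : R -> R) (ch : continuous h) (ph : forall x, h (x + tp) = h x)
  (oh : forall x, h (- x) = - h x) : RI 0 tp h = 0.
Proof.
have E : RI 0 tp h = - RI 0 tp h.
  have ntp : - tp <= 0 by rewrite oppr_le0 tp_ge0.
  have := RI_shift h ch (- tp) 0 tp ntp; rewrite add0r addNr => {1}<-.
  have -> : (fun x => h (x + tp)) = h by apply/funext => x; exact: ph.
  have := RI_opp h ch 0 tp tp_ge0; rewrite oppr0 => ->.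
  have -> : (fun x => h (- x)) = (fun x => (-1) * h x) by apply/funext => x; rewrite oh mulN1r.
  by rewrite RI_scale // mulN1r.
lra.
Qed.

End trig.

Section cont.
Context {R : realType}.
Lemma contM (f g : R -> R) : continuous f -> continuous g -> continuous (fun x => f x * g x).
Proof. by move=> cf cg x; apply: cvgM; [exact: cf | exact: cg]. Qed.
Lemma contA (f g : R -> R) : continuous f -> continuous g -> continuous (fun x => f x + g x).
Proof. by move=> cf cg x; apply: cvgD; [exact: cf | exact: cg]. Qed.
Lemma contB (f g : R -> R) : continuous f -> continuous g -> continuous (fun x => f x - g x).
Proof. by move=> cf cg x; apply: cvgB; [exact: cf | exact: cg]. Qed.
Lemma contC (c : R) : continuous (fun _ : R => c).
Proof. by move=> x; exact: cvg_cst. Qed.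
Lemma contX (f : R -> R) (n : nat) : continuous f -> continuous (fun x => f x ^+ n).
Proof. by move=> cf; elim: n => [|n IH]; [exact: contC | under eq_fun do rewrite exprS; exact: contM]. Qed.
Lemma contO (f g : R -> R) : continuous f -> continuous g -> continuous (fun x => g (f x)).
Proof. by move=> cf cg x; apply: (@continuous_comp _ _ _ f g); [exact: cf | exact: cg]. Qed.
Lemma cont_cos : continuous (@cos R). Proof. exact: continuous_cos. Qed.
Lemma cont_sin : continuous (@sin R). Proof. exact: continuous_sin. Qed.
Lemma cont_sqrt : continuous (@Num.sqrt R). Proof. exact: sqrt_continuous. Qed.
End cont.

Section nm.
Context {R : realType}.
Lemma le_int_nm d (T : measurableType d) (m : {measure set T -> \bar R}) (f g : T -> \bar R) :
  (forall x, 0 <= g x)%E -> (forall x, g x <= f x)%E -> (\int[m]_x g x <= \int[m]_x f x)%E.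
Proof.
move=> g0 gf; have f0 x : (0 <= f x)%E by exact: le_trans (g0 x) (gf x).
rewrite !ge0_integralTE //.
apply: le_ereal_sup => _ [h hg <-]; exists h => //= x; exact: le_trans (hg x) (gf x).
Qed.
End nm.

Section main.
Context {R : realType}.
Variables (fA fR : R -> R) (cA : continuous fA) (cR : continuous fR) (Rad : R).
Hypothesis Rad0 : 0 < Rad.
Local Notation RI a b f := (Rintegral (@lebesgue_measure R) `[a, b] f).
Local Notation tp := (pi *+ 2 : R).

Definition gg (x : R) := fA x + fR x.
Lemma cg : continuous gg. Proof. exact: contA. Qed.
Definition mm (x : R) := gg (Rad * Num.sqrt ((1 - cos x) ^+ 2 + sin x ^+ 2)).
Lemma cmm : continuous mm.
Proof.
apply: contO cg; apply: contM (contC _) _; apply: contO cont_sqrt.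
apply: contA; apply: contX; [apply: contB (contC _) cont_cos | exact: cont_sin].
Qed.
Definition k1 x := mm x * (1 - cos x).
Definition k2 x := mm x * sin x.
Lemma ck1 : continuous k1. Proof. apply: contM cmm _; exact: contB (contC _) cont_cos. Qed.
Lemma ck2 : continuous k2. Proof. exact: contM cmm cont_sin. Qed.
Lemma mmP x : mm (x + tp) = mm x. Proof. by rewrite /mm cosP sinP. Qed.
Lemma mmN x : mm (- x) = mm x. Proof. by rewrite /mm cosN sinN sqrrN. Qed.

Lemma A_eq : RI 0 tp k1 = 2 * RI 0 pi k1.
Proof.
apply: even_half ck1 _ _ => x; rewrite /k1 ?mmP ?cosP ?mmN ?cosN //.
Qed.

Lemma B_eq : RI 0 tp k2 = 0.
Proof.
apply: odd_zero ck2 _ _ => x; rewrite /k2 ?mmP ?sinP ?mmN ?sinN ?mulrN //.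
Qed.

Definition H1 (t x : R) := (Fint fA fR 1 (Rad * cos t - Rad * cos x, (Rad + 0) * sin t - (Rad + 0) * sin x)).1.
Definition H2 (t x : R) := (Fint fA fR 1 (Rad * cos t - Rad * cos x, (Rad + 0) * sin t - (Rad + 0) * sin x)).2.

Lemma norm_shift t x : enorm (Rad * cos t - Rad * cos (x + t), (Rad + 0) * sin t - (Rad + 0) * sin (x + t))
  = Rad * Num.sqrt ((1 - cos x) ^+ 2 + sin x ^+ 2).
Proof.
rewrite /enorm /= addr0 cosD sinD.
have E : (Rad * cos t - Rad * (cos x * cos t - sin x * sin t)) ^+ 2 +
   (Rad * sin t - Rad * (sin x * cos t + cos x * sin t)) ^+ 2 =
   Rad ^+ 2 * (((1 - cos x) ^+ 2 + sin x ^+ 2) * (cos t ^+ 2 + sin t ^+ 2)) by ring.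
rewrite E cos2Dsin2 mulr1 sqrtrM ?sqr_ge0 // sqrtr_sqr ger0_norm // ltW //.
Qed.

Lemma H1_shift t x : H1 t (x + t) = Rad * (cos t * k1 x + sin t * k2 x).
Proof.
rewrite /H1 /Fint /Tapp /= norm_shift /k1 /k2 /mm /gg ?addr0 ?cosD ?sinD.
ring.
Qed.

Lemma H2_shift t x : H2 t (x + t) = Rad * (sin t * k1 x + (- cos t) * k2 x).
Proof.
rewrite /H2 /Fint /Tapp /= norm_shift /k1 /k2 /mm /gg ?addr0 ?cosD ?sinD.
ring.
Qed.

Lemma contF1 (u1 u2 : R -> R) : continuous u1 -> continuous u2 ->
  continuous (fun x => (Fint fA fR 1 (u1 x, u2 x)).1).
Proof.
move=> c1 c2; rewrite /Fint /Tapp /enorm /=.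
have cn : continuous (fun x => Num.sqrt (u1 x ^+ 2 + u2 x ^+ 2)).
  by apply: contO cont_sqrt; apply: contA; exact: contX.
by apply: contA; apply: contM => //; apply: contO cn _.
Qed.

Lemma contF2 (u1 u2 : R -> R) : continuous u1 -> continuous u2 ->
  continuous (fun x => (Fint fA fR 1 (u1 x, u2 x)).2).
Proof.
move=> c1 c2; rewrite /Fint /Tapp /enorm /=.
have cn : continuous (fun x => Num.sqrt (u1 x ^+ 2 + u2 x ^+ 2)).
  by apply: contO cont_sqrt; apply: contA; exact: contX.
apply: contA; apply: contM => //; try apply: contO cn _ => //.
exact: contM (contC _) c2.
Qed.

Lemma cu1 t : continuous (fun x : R => Rad * cos t - Rad * cos x).
Proof. by apply: contB (contC _) _; apply: contM (contC _) cont_cos. Qed.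
Lemma cu2 t : continuous (fun x : R => (Rad + 0) * sin t - (Rad + 0) * sin x).
Proof. by apply: contB (contC _) _; apply: contM (contC _) cont_sin. Qed.

Lemma cH1 t : continuous (H1 t). Proof. exact: contF1 (cu1 t) (cu2 t). Qed.
Lemma cH2 t : continuous (H2 t). Proof. exact: contF2 (cu1 t) (cu2 t). Qed.

Definition II := RI 0 pi k1.

Lemma RI_H1 t : 0 <= t <= tp -> RI 0 tp (H1 t) = Rad * (cos t * (2 * II)).
Proof.
move=> tt; rewrite -(per_shift (H1 t) (cH1 t) _ t tt); last by move=> x; rewrite /H1 cosP sinP.
have -> : (fun x => H1 t (x + t)) = (fun x => Rad * (cos t * k1 x + sin t * k2 x)).
  by apply/funext => x; exact: H1_shift.
rewrite RI_scale; last by apply: contA; apply: contM (contC _) _; [exact: ck1 | exact: ck2].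
rewrite RI_add; [|by apply: contM (contC _) ck1|by apply: contM (contC _) ck2].
by rewrite (RI_scale k1 ck1) (RI_scale k2 ck2) A_eq B_eq mulr0 addr0.
Qed.

Lemma RI_H2 t : 0 <= t <= tp -> RI 0 tp (H2 t) = Rad * (sin t * (2 * II)).
Proof.
move=> tt; rewrite -(per_shift (H2 t) (cH2 t) _ t tt); last by move=> x; rewrite /H2 cosP sinP.
have -> : (fun x => H2 t (x + t)) = (fun x => Rad * (sin t * k1 x + (- cos t) * k2 x)).
  by apply/funext => x; exact: H2_shift.
rewrite RI_scale; last by apply: contA; apply: contM (contC _) _; [exact: ck1 | exact: ck2].
rewrite RI_add; [|by apply: contM (contC _) ck1|by apply: contM (contC _) ck2].
by rewrite (RI_scale k1 ck1) (RI_scale k2 ck2) A_eq B_eq mulr0 addr0.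
Qed.

Let U := uniform_prob (@two_pi_gt0 R).
Let p := ellipse_param Rad 0.

Lemma UI (f : R -> R) (cf : continuous f) :
  (\int[U]_x (f x)%:E = (tp^-1)%:E * \int[lebesgue_measure]_(x in `[0%R, tp]) (f x)%:E)%E.
Proof.
have mf : measurable_fun setT (EFin \o f).
  by apply/measurable_EFinP; exact: continuous_measurable_fun.
have fi := cint f cf 0 tp.
rewrite integralE [in RHS]integralE.
rewrite (integral_uniform _ (measurable_funepos mf)); last by move=> x; exact: funepos_ge0.
rewrite (integral_uniform _ (measurable_funeneg mf)); last by move=> x; exact: funeneg_ge0.
rewrite subr0.
have h1 : (\int[lebesgue_measure]_(x in `[0%R, tp]) ((EFin \o f)^\+ x))%E \is a fin_num.
  by apply: integrable_pos_fin_num fi.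
have h2 : (\int[lebesgue_measure]_(x in `[0%R, tp]) ((EFin \o f)^\- x))%E \is a fin_num.
  by apply: integrable_neg_fin_num fi.
rewrite -(fineK h1) -(fineK h2) -!EFinM -!EFinB.
by rewrite mulrBr.
Qed.

Lemma measN d (T : measurableType d) (u1 u2 : T -> R) :
  measurable_fun setT u1 -> measurable_fun setT u2 ->
  measurable_fun setT (fun t => Num.sqrt (u1 t ^+ 2 + u2 t ^+ 2)).
Proof.
move=> m1 m2.
have h : measurable_fun setT (fun t => u1 t ^+ 2 + u2 t ^+ 2).
  by apply: measurable_funD; apply: measurable_funX.
exact: (measurableT_comp (continuous_measurable_fun cont_sqrt) h).
Qed.

Lemma measF1 d (T : measurableType d) (u1 u2 : T -> R) :
  measurable_fun setT u1 -> measurable_fun setT u2 ->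
  measurable_fun setT (fun t => (Fint fA fR 1 (u1 t, u2 t)).1).
Proof.
move=> m1 m2; rewrite /Fint /Tapp /enorm /=.
have mn := @measN _ _ u1 u2 m1 m2.
apply: measurable_funD; apply: measurable_funM => //.
- exact: measurableT_comp (continuous_measurable_fun cA) mn.
- exact: measurableT_comp (continuous_measurable_fun cR) mn.
Qed.

Lemma measF2 d (T : measurableType d) (u1 u2 : T -> R) :
  measurable_fun setT u1 -> measurable_fun setT u2 ->
  measurable_fun setT (fun t => (Fint fA fR 1 (u1 t, u2 t)).2).
Proof.
move=> m1 m2; rewrite /Fint /Tapp /enorm /=.
have mn := @measN _ _ u1 u2 m1 m2.
apply: measurable_funD; apply: measurable_funM => //.
- exact: measurableT_comp (continuous_measurable_fun cA) mn.
- by apply: measurable_funM => //; exact: measurable_cst.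
- exact: measurableT_comp (continuous_measurable_fun cR) mn.
Qed.

Lemma PF (h : R * R -> R) (mh : measurable_fun setT h) (ch : continuous (fun x => h (p x))) :
  Rintegral (ring_state Rad) setT h = tp^-1 * RI 0 tp (fun x => h (p x)).
Proof.
have mhE : measurable_fun setT (EFin \o h) by apply/measurable_EFinP.
have mp : measurable_fun setT p := measurable_ellipse_param Rad 0.
have iU : U.-integrable (p @^-1` setT) ((EFin \o h) \o p).
  rewrite preimage_setT; apply/integrableP; split.
    exact: measurableT_comp mhE mp.
  have -> : (\int[U]_x `|((EFin \o h) \o p) x|)%E = (\int[U]_x (`|h (p x)|)%:E)%E by [].
  rewrite (UI (fun x => `|h (p x)|)); last by apply: contO ch _; exact: norm_continuous.
  apply: lte_mul_pinfty => //.
    by rewrite lee_fin invr_ge0 tp_ge0.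
  by have /integrableP[_] := cint _ ch 0 tp.
rewrite /Rintegral /ring_state /ellipse_state /distribution /=.
rewrite (integral_pushforward mp mhE iU measurableT).
rewrite preimage_setT (UI _ ch) fineM //.
by apply: integrable_fin_num (cint _ ch 0 tp).
Qed.

Lemma K_param t : 0 <= t <= tp -> Kfield fA fR 1 (ring_state Rad) (p t) =
  (tp^-1 * (Rad * (cos t * (2 * II))), tp^-1 * (Rad * (sin t * (2 * II)))).
Proof.
move=> tt; rewrite /Kfield; congr pair.
- rewrite (PF (fun y => (Fint fA fR 1 ((p t).1 - y.1, (p t).2 - y.2)).1)).
  + by rewrite -(RI_H1 t tt).
  + have m1 : measurable_fun setT (fun y : R * R => (p t).1 - y.1).
      by apply: measurable_funB; [exact: measurable_cst | exact: measurable_fst].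
    have m2 : measurable_fun setT (fun y : R * R => (p t).2 - y.2).
      by apply: measurable_funB; [exact: measurable_cst | exact: measurable_snd].
    exact: (measF1 _ _ _ _ m1 m2).
  + exact: cH1 t.
- rewrite (PF (fun y => (Fint fA fR 1 ((p t).1 - y.1, (p t).2 - y.2)).2)).
  + by rewrite -(RI_H2 t tt).
  + have m1 : measurable_fun setT (fun y : R * R => (p t).1 - y.1).
      by apply: measurable_funB; [exact: measurable_cst | exact: measurable_fst].
    have m2 : measurable_fun setT (fun y : R * R => (p t).2 - y.2).
      by apply: measurable_funB; [exact: measurable_cst | exact: measurable_snd].
    exact: (measF2 _ _ _ _ m1 m2).
  + exact: cH2 t.
Qed.

Let mu := ring_state Rad.

Lemma measKi (H : (R * R) * (R * R) -> R) (mH : measurable_fun setT H) :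
  measurable_fun setT (fun x : R * R => Rintegral mu setT (fun y => H (x, y))).
Proof.
have mHE : measurable_fun setT (EFin \o H) by apply/measurable_EFinP.
have mP := @measurable_fun_fubini_tonelli_F _ _ _ _ _ mu _ (measurable_funepos mHE) (funepos_ge0 _).
have mN := @measurable_fun_fubini_tonelli_F _ _ _ _ _ mu _ (measurable_funeneg mHE) (funeneg_ge0 _).
have := measurableT_comp (fine_measurable (@measurableT _ (\bar R))) (emeasurable_funB mP mN).
apply: eq_measurable_fun => x _.
rewrite /Rintegral [in RHS]integralE /fubini_F /=. congr (fine (_ - _)); apply: eq_integral => y _ //. by rewrite !funeposE. by rewrite !funenegE.
Qed.

Lemma measK : measurable_fun setT (fun x : R * R => enorm (Kfield fA fR 1 mu x)).
Proof.
rewrite /Kfield /enorm /=.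
have m11 : measurable_fun setT (fun z : (R * R) * (R * R) => z.1.1 - z.2.1).
  by apply: measurable_funB; apply: measurableT_comp; first [exact: measurable_fst | exact: measurable_snd].
have m22 : measurable_fun setT (fun z : (R * R) * (R * R) => z.1.2 - z.2.2).
  by apply: measurable_funB; apply: measurableT_comp; first [exact: measurable_fst | exact: measurable_snd].
apply: measN.
- exact: measKi (measF1 _ _ _ _ m11 m22).
- exact: measKi (measF2 _ _ _ _ m11 m22).
Qed.

Lemma cp : continuous p.
Proof.
move=> x.
have h1 : (fun y : R => Rad * cos y) @ x --> Rad * cos x.
  by apply: cvgM; [exact: cvg_cst | exact: continuous_cos].
have h2 : (fun y : R => (Rad + 0) * sin y) @ x --> (Rad + 0) * sin x.
  by apply: cvgM; [exact: cvg_cst | exact: continuous_sin].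
have := cvg_pair h1 h2.
exact.
Qed.

Lemma Uval (A : set R) : U A = (\int[lebesgue_measure]_(x in A) (uniform_pdf 0 tp x)%:E)%E.
Proof. by []. Qed.

Lemma supp_p t : 0 <= t <= tp -> msupp mu (p t).
Proof.
move=> /andP[t0 t2] O oO Ot.
have oV : open (p @^-1` O) by apply: open_comp => // x _; exact: cp.
have /nbhs_ballP[e /= e0 He] : nbhs t (p @^-1` O).
  by move: oV; rewrite openE => /(_ t Ot).
have pi0 : 0 < pi :> R by exact: pi_gt0.
pose dl := e * pi / (e + pi).
have ep0 : 0 < e + pi by rewrite addr_gt0.
have dlE : dl * (e + pi) = e * pi by rewrite /dl mulfVK // gt_eqF.
have dl0 : 0 < dl by rewrite /dl divr_gt0 // mulr_gt0.
have dle : dl <= e by nra.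
have dlp : dl <= pi by nra.
have tpE : tp = pi + pi by rewrite mulr2n.
have [c [c0 c1 cb]] : exists c, [/\ 0 <= c, c + dl <= tp &
    forall x, c < x < c + dl -> `|t - x| < e].
  have [tpi|tpi] := lerP t pi.
  - exists t; split => //; first lra.
    move=> x /andP[tx xt]; rewrite ltr_norml; apply/andP; split; lra.
  - exists (t - dl); split; [lra|lra|].
    move=> x /andP[tx xt]; rewrite ltr_norml; apply/andP; split; lra.
have JV : `]c, c + dl[ `<=` p @^-1` O.
  move=> x /=; rewrite in_itv /= => cx; apply: He.
  by rewrite -ball_normE /= cb.
rewrite /mu /ring_state /ellipse_state /distribution /pushforward /=.
change (0 < \int[lebesgue_measure]_(x in p @^-1` O) (uniform_pdf 0 tp x)%:E)%E.
have H1 : (0 < \int[lebesgue_measure]_(x in `]c%R, (c + dl)%R[) (uniform_pdf 0 tp x)%:E)%E.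
  have -> : (\int[lebesgue_measure]_(x in `]c%R, (c + dl)%R[) (uniform_pdf 0 tp x)%:E =
     \int[lebesgue_measure]_(x in `]c%R, (c + dl)%R[) (cst (tp^-1)%:E) x)%E.
    apply: eq_integral => x; rewrite inE /= in_itv /= => /andP[cx xc].
    rewrite /uniform_pdf subr0; case: ifPn => // /negP H; exfalso; apply: H.
    apply/andP; split; lra.
  rewrite integral_cst //= lebesgue_measure_itv /= lte_fin ltrDl dl0 /=.
  by rewrite -EFinD -EFinM lte_fin mulr_gt0 // ?invr_gt0 ?tp_gt0 //; lra.
have H2 : (\int[lebesgue_measure]_(x in `]c%R, (c + dl)%R[) (uniform_pdf 0 tp x)%:E <=
   \int[lebesgue_measure]_(x in p @^-1` O) (uniform_pdf 0 tp x)%:E)%E.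
  apply: ge0_subset_integral => //.
  - exact: open_measurable.
  - apply/measurable_EFinP; apply: measurable_funTS; exact: measurable_uniform_pdf.
  - by move=> x _; rewrite lee_fin uniform_pdf_ge0 // tp_gt0.
exact: lt_le_trans H1 H2.
Qed.

Lemma Kzero (h0 : II = 0) t : 0 <= t <= tp -> Kfield fA fR 1 mu (p t) = (0, 0).
Proof. by move=> tt; rewrite K_param // h0 !mulr0. Qed.

Lemma enorm0 (d : R * R) : enorm d = 0 -> d = (0, 0).
Proof.
case: d => a b; rewrite /enorm /= => /eqP; rewrite sqrtr_eq0 => H.
have ha : a ^+ 2 = 0 by apply/eqP; rewrite eq_le sqr_ge0 andbT; apply: le_trans H; rewrite lerDl sqr_ge0.
have hb : b ^+ 2 = 0 by apply/eqP; rewrite eq_le sqr_ge0 andbT; apply: le_trans H; rewrite lerDr sqr_ge0.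
by move/eqP: ha; rewrite sqrf_eq0 => /eqP ->; move/eqP: hb; rewrite sqrf_eq0 => /eqP ->.
Qed.

Lemma intK0 (h0 : II = 0) : (\int[mu]_x (enorm (Kfield fA fR 1 mu x))%:E = 0)%E.
Proof.
have mK := measK.
have mKE : measurable_fun setT (fun x => (enorm (Kfield fA fR 1 mu x))%:E).
  exact/measurable_EFinP.
have mp : measurable_fun setT p := measurable_ellipse_param Rad 0.
rewrite /mu /ring_state /ellipse_state /distribution.
rewrite ge0_integral_pushforward //; last by move=> x _; rewrite lee_fin sqrtr_ge0.
rewrite preimage_setT integral_uniform //; last 2 first.
- exact: measurableT_comp mKE mp.
- by move=> x; rewrite /= lee_fin sqrtr_ge0.
rewrite integral0_eq ?mule0 // => x; rewrite /= in_itv /= => xt.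
by rewrite Kzero // /enorm /= expr0n /= addr0 sqrtr0.
Qed.

Lemma U_full : U `[0%R, tp] = 1%E.
Proof. by rewrite Uval integral_uniform_pdf1 //; exact: tp_gt0. Qed.

Lemma main_iff : equilibrium fA fR 1 mu <-> II = 0.
Proof.
split.
- move=> [_ [N [mN muN sN]]].
  have [t [tt Nt]] : exists t, (0 <= t <= tp) /\ ~ N (p t).
    apply: contrapT => H.
    have sub : `[0%R, tp] `<=` p @^-1` N.
      move=> x /= xt; apply: contrapT => nN; apply: H; exists x; split => //.
    have mpN : measurable (p @^-1` N).
      by rewrite -[X in measurable X]setTI; exact: (measurable_ellipse_param Rad 0) measurableT _ mN.
    have : (U `[0%R, tp] <= U (p @^-1` N))%E.
      by apply: le_measure => //; rewrite inE.
    have -> : U (p @^-1` N) = mu N by [].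
    by rewrite muN U_full lee_fin ler10.
  have Pt : msupp mu (p t) -> Kfield fA fR 1 mu (p t) = (0, 0).
    by apply: contrapT => nP; apply: Nt; apply: sN.
  move: (Pt (supp_p t tt)); rewrite K_param // => -[e1 e2].
  have k0 : tp^-1 * Rad * 2 != 0.
    by rewrite !mulf_neq0 // ?invr_eq0 ?gt_eqF ?tp_gt0 // pnatr_eq0.
  have c0 : cos t * II = 0.
    have : (tp^-1 * Rad * 2) * (cos t * II) = 0 by rewrite -e1; ring.
    by move/eqP; rewrite mulf_eq0 (negbTE k0) /= => /eqP.
  have s0 : sin t * II = 0.
    have : (tp^-1 * Rad * 2) * (sin t * II) = 0 by rewrite -e2; ring.
    by move/eqP; rewrite mulf_eq0 (negbTE k0) /= => /eqP.
  have := cos2Dsin2 t => E.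
  have -> : II = II * (cos t ^+ 2 + sin t ^+ 2) by rewrite E mulr1.
  have -> : II * (cos t ^+ 2 + sin t ^+ 2) = cos t * (cos t * II) + sin t * (sin t * II) by ring.
  by rewrite c0 s0 !mulr0 addr0.
- move=> h0; split.
  + move=> C _; apply/integrableP; split.
      by apply: measurable_funTS; apply/measurable_EFinP; exact: measK.
    rewrite integral_mkcond.
    apply: (@le_lt_trans _ _ (\int[mu]_x (enorm (Kfield fA fR 1 mu x))%:E)%E).
      apply: le_int_nm => x; rewrite /patch; case: ifPn => _ /=.
      * by rewrite lee_fin normr_ge0.
      * done.
      * by rewrite ger0_norm // sqrtr_ge0.
      * by rewrite lee_fin sqrtr_ge0.
    by rewrite intK0 // ltry.
  + have mK := measK.
    pose N := setT `&` ((fun x => enorm (Kfield fA fR 1 mu x)) @^-1` (~` [set 0])).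
    have mN : measurable N.
      by apply: mK => //; apply: measurableC.
    exists N; split => //.
    * have -> : mu N = U (p @^-1` N) by [].
      rewrite Uval integral0_eq // => x /= [_ Nx].
      rewrite /uniform_pdf; case: ifPn => // xt.
      by exfalso; apply: Nx; rewrite Kzero // /enorm /= expr0n /= addr0 sqrtr0.
    * move=> x /= nP; split => //; move=> /enorm0 K0; apply: nP => _; exact: K0.
Qed.

End main.

Theorem lemma3p4 (R : realType) (fA fR : R -> R) (da de : R)
  (* f_A, f_R smooth (on a neighbourhood of [0, oo); values off [0, oo) are irrelevant) *)
  (smA : forall (n : nat) (x : R), derivable (derive1n n fA) x 1)
  (smR : forall (n : nat) (x : R), derivable (derive1n n fR) x 1)
  (* f_A, f_R integrable on [0, oo) *)
  (intA : lebesgue_measure.-integrable `[0%R, +oo[ (fun x => (fA x)%:E))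
  (intR : lebesgue_measure.-integrable `[0%R, +oo[ (fun x => (fR x)%:E))
  (* signs *)
  (fR_ge0 : forall x : R, 0 <= x -> 0 <= fR x)
  (fA_le0 : forall x : R, 0 <= x -> fA x <= 0)
  (* the distance d_a *)
  (da_gt0 : 0 < da)
  (fAR_le0 : forall rho : R, da < rho -> fA rho + fR rho <= 0)
  (fAR_gt0 : forall rho : R, 0 <= rho -> rho < da -> 0 < fA rho + fR rho)
  (* F(., T) is C^1 with bounded total derivatives in both arguments *)
  (F_diff : forall chi : R, 0 <= chi <= 1 ->
     forall x : (R * R)%type, differentiable (Fint fA fR chi) x)
  (F_C1 : forall chi : R, 0 <= chi <= 1 ->
     forall v : (R * R)%type, continuous (fun x : (R * R)%type => 'd (Fint fA fR chi) x v))
  (F_bdd_d : exists M : R, forall chi : R, 0 <= chi <= 1 ->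
     forall x v : (R * R)%type, enorm ('d (Fint fA fR chi) x v) <= M * enorm v)
  (F_bdd_T : exists M : R, forall d : (R * R)%type,
     `|fA (enorm d)| * enorm d <= M)
  (* the distance d_e *)
  (da_lt_de : da < de)
  (decr : forall chi : R, 0 <= chi <= 1 ->
     forall x y : R, 0 <= x -> x < y -> y <= de ->
       chi * fA y + fR y < chi * fA x + fR x)
  (Rad : R) (Rad_gt0 : 0 < Rad) :
  equilibrium fA fR 1 (ring_state Rad) <->
  Rintegral lebesgue_measure `[0%R, pi]
    (fun phi : R => (fA + fR) (Rad * Num.sqrt ((1 - cos phi) ^+ 2 + sin phi ^+ 2))
                    * (1 - cos phi)) = 0.
Proof.
have cA : continuous fA.
  move=> x; apply: differentiable_continuous; apply/derivable1_diffP; exact: (smA 0 x).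
have cR : continuous fR.
  move=> x; apply: differentiable_continuous; apply/derivable1_diffP; exact: (smR 0 x).
have H := @main_iff R fA fR cA cR Rad Rad_gt0.
rewrite /II /k1 /mm /gg in H.
have E : forall y, (fA + fR) y = fA y + fR y by [].
under eq_Rintegral => x _ do rewrite E.
exact: H.
Qed.
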